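(* Let $f:\mathbb{F}_2^{\,n}\to\mathbb{R}$, $s\ge1$, $0<\epsilon\le 1/2$, and let $d$ satisfy $2^d=\frac{2s}{\epsilon^4}$. Let $H\le\mathbb{F}_2^{\,n}$ be a uniformly random subspace of codimension $d$. Let $\mathcal E_1\ge\mathcal E_2\ge\dots\ge\mathcal E_{2^n}$ be the energies $\hat f(\alpha)^2$ of the $2^n$ Fourier coefficients of $f$ in non-increasing order, and let $y_1\ge y_2\ge\dots\ge y_{2^d}$ be the energies of the $2^d$ cosets of $H$ in non-increasing order. Then $$\Pr_H\left[\sum_{i=1}^s (y_i-\mathcal E_i)\le 5\epsilon^2\|f\|_2^2\right]\ge\frac{15}{16}.$$
   Context: $\hat f(\alpha)=\frac{1}{2^n}\sum_x f(x)(-1)^{\alpha\cdot x}$, $\|f\|_2^2=\frac{1}{2^n}\sum_xf(x)^2$. The energy of a coset $a+H$ is $\sum_{\beta\in a+H}\hat f(\beta)^2$. *)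

(* Defs.v *)
From HB Require Import structures.
From mathcomp Require Import all_boot all_order all_algebra all_fingroup.
Set Implicit Arguments. Unset Strict Implicit. Unset Printing Implicit Defensive.
Import Order.TTheory GRing.Theory Num.Theory.
Local Open Scope ring_scope.

Definition dotF2 (n : nat) (a x : 'rV['F_2]_n) : 'F_2 := (a *m x^T) 0 0.

Definition chr (R : nzRingType) (n : nat) (a x : 'rV['F_2]_n) : R :=
  if dotF2 a x == 0 then 1 else -1.

Definition fourier (R : fieldType) (n : nat) (f : 'rV['F_2]_n -> R)
  (a : 'rV['F_2]_n) : R :=
  (2 ^+ n)^-1 * \sum_(x : 'rV['F_2]_n) f x * chr R a x.

Definition norm2sq (R : fieldType) (n : nat) (f : 'rV['F_2]_n -> R) : R :=
  (2 ^+ n)^-1 * \sum_(x : 'rV['F_2]_n) f x ^+ 2.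

(* Subspaces of F_2^n of codimension d, each represented canonically by the
   square matrix <<A>> spanning it (mxalgebra row spaces). *)
Definition codim_subspaces (n d : nat) : {set 'M['F_2]_n} :=
  [set A : 'M['F_2]_n | (<<A>>%MS == A) && (\rank A == n - d)%N].

Definition cosets_of (n : nat) (A : 'M['F_2]_n) : {set {set 'rV['F_2]_n}} :=
  [set [set b : 'rV['F_2]_n | (b - a <= A)%MS] | a : 'rV['F_2]_n].

Definition energy (R : fieldType) (n : nat) (f : 'rV['F_2]_n -> R)
  (C : {set 'rV['F_2]_n}) : R :=
  \sum_(b in C) fourier f b ^+ 2.

Definition top_sum (R : realFieldType) (s : nat) (l : seq R) : R :=
  \sum_(i < s) nth 0 (sort (fun u v : R => v <= u) l) i.

Definition coef_energies (R : realFieldType) (n : nat) (f : 'rV['F_2]_n -> R)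
  : seq R := [seq fourier f a ^+ 2 | a <- enum [set: 'rV['F_2]_n]].

Definition coset_energies (R : realFieldType) (n : nat) (f : 'rV['F_2]_n -> R)
  (A : 'M['F_2]_n) : seq R := [seq energy f C | C <- enum (cosets_of A)].

Definition prob (R : realFieldType) (T : finType) (S : {set T}) (P : pred T) : R :=
  #|[set x in S | P x]|%:R / #|S|%:R.
Arguments prob {R T} S P.

(* Main.v *)
Require Import Defs.
From HB Require Import structures.
From mathcomp Require Import all_boot all_order all_algebra all_fingroup.
Import Order.TTheory GRing.Theory Num.Theory.
Local Open Scope ring_scope.
From mathcomp Require Import ring lra zify.
Set Implicit Arguments. Unset Strict Implicit. Unset Printing Implicit Defensive.

Section Top.
Variable R : realFieldType.
Implicit Types (l : seq R) (t : R).

Definition pp (x : R) := Num.max x 0.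

Lemma pp_ge0 x : 0 <= pp x. Proof. by rewrite /pp le_max lexx orbT. Qed.
Lemma pp_ge x : x <= pp x. Proof. by rewrite /pp le_max lexx. Qed.
Lemma pp_id x : 0 <= x -> pp x = x. Proof. by move=> h; rewrite /pp max_l. Qed.
Lemma pp_0 x : x <= 0 -> pp x = 0. Proof. by move=> h; rewrite /pp max_r. Qed.
Lemma pp_add x y : pp (x + y) <= pp x + pp y.
Proof.
rewrite /pp ge_max; apply/andP; split.
  by apply: lerD; rewrite le_max lexx.
by apply: addr_ge0; rewrite le_max lexx orbT.
Qed.
Lemma pp_le x y : x <= y -> pp x <= pp y.
Proof. by move=> h; rewrite /pp ge_max le_max h /= le_max lexx !orbT. Qed.

Lemma sum_nat_zero (h : nat -> R) k m :
  (forall i, (m <= i)%N -> h i = 0) -> (forall i, (k <= i < m)%N -> h i = 0) ->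
  \sum_(0 <= i < k) h i = \sum_(0 <= i < m) h i.
Proof.
move=> h1 h2; case: (leqP k m) => km.
  rewrite [RHS](big_cat_nat (leq0n k) km) /= [X in _ = _ + X]big1_seq ?addr0 //.
  by move=> i /andP[_]; rewrite mem_index_iota; apply: h2.
rewrite [LHS](big_cat_nat (leq0n m) (ltnW km)) /= [X in _ + X = _]big1_seq ?addr0 //.
by move=> i /andP[_]; rewrite mem_index_iota => /andP[a b]; apply: h1.
Qed.

Lemma sum_nat_le (h : nat -> R) k m :
  (forall i, (m <= i)%N -> h i = 0) -> (forall i, 0 <= h i) ->
  \sum_(0 <= i < k) h i <= \sum_(0 <= i < m) h i.
Proof.
move=> h1 h2; case: (leqP k m) => km.
  rewrite [X in _ <= X](big_cat_nat (leq0n k) km) /= lerDl.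
  by apply: sumr_ge0 => i _.
rewrite [X in X <= _](big_cat_nat (leq0n m) (ltnW km)) /= [X in _ + X <= _]big1_seq ?addr0 //.
by move=> i /andP[_]; rewrite mem_index_iota => /andP[a b]; apply: h1.
Qed.

Definition srt l := sort (fun u v : R => v <= u) l.

Lemma top_sumE s l : top_sum s l = \sum_(0 <= i < s) nth 0 (srt l) i.
Proof. by rewrite /top_sum big_mkord. Qed.

Lemma sum_srt (g : R -> R) l : \sum_(x <- l) g x = \sum_(0 <= i < size (srt l)) g (nth 0 (srt l) i).
Proof. by rewrite -(big_nth 0 predT g) /srt; apply: perm_big; rewrite perm_sym perm_sort. Qed.

Lemma top_U s l t : 0 <= t -> top_sum s l <= s%:R * t + \sum_(x <- l) pp (x - t).
Proof.
move=> t0; rewrite top_sumE sum_srt.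
apply: (@le_trans _ _ (\sum_(0 <= i < s) (t + pp (nth 0 (srt l) i - t)))).
  apply: ler_sum => i _; rewrite -lerBlDl; exact: pp_ge.
rewrite big_split /= sumr_const_nat subn0 mulr_natl lerD2l.
apply: sum_nat_le => [i hi|i]; last exact: pp_ge0.
by rewrite nth_default // sub0r pp_0 // oppr_le0.
Qed.

Lemma top_L s l : all (fun x => 0 <= x) l ->
  exists2 t, 0 <= t & top_sum s l = s%:R * t + \sum_(x <- l) pp (x - t).
Proof.
move=> hl; set u := srt l.
have u0 i : 0 <= nth 0 u i.
  case: (ltnP i (size u)) => hi; last by rewrite nth_default.
  have : nth 0 u i \in l by rewrite -(mem_sort (fun u v : R => v <= u)) mem_nth.
  by move/(allP hl).
have srtd : sorted (fun u v : R => v <= u) u.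
  by apply: sort_sorted => x y; exact: le_total.
have mono i j : (i <= j)%N -> nth 0 u j <= nth 0 u i.
  move=> ij; case: (ltnP j (size u)) => hj.
    have tr : transitive (fun u v : R => v <= u) by move=> y x z h1 h2; exact: le_trans h2 h1.
    apply: (sorted_leq_nth tr (fun x => lexx x) 0 srtd) => //.
    by rewrite inE (leq_ltn_trans ij hj).
  by rewrite (nth_default 0 hj).
exists (nth 0 u s); first exact: u0.
rewrite top_sumE sum_srt -/u.
transitivity (\sum_(0 <= i < s) (nth 0 u s + pp (nth 0 u i - nth 0 u s))).
  apply: eq_big_nat => i /andP[_ hi].
  by rewrite pp_id ?subr_ge0 ?mono 1?ltnW // addrC subrK.
rewrite big_split /= sumr_const_nat subn0 mulr_natl; congr (_ + _).
apply: sum_nat_zero => [i hi|i /andP[hi _]].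
  by rewrite nth_default // sub0r pp_0 // oppr_le0.
by rewrite pp_0 // subr_le0 mono.
Qed.

End Top.

Section Top2.
Variable R : realFieldType.

Lemma sum_cst (I : Type) (r : seq I) (c : R) : \sum_(i <- r) c = (size r)%:R * c.
Proof.
elim: r => [|x r IH]; first by rewrite big_nil mul0r.
by rewrite big_cons IH /= -add1n natrD mulrDl mul1r.
Qed.

Lemma cs_seq (I : Type) (r : seq I) (a : I -> R) :
  (\sum_(i <- r) a i) ^+ 2 <= (size r)%:R * \sum_(i <- r) a i ^+ 2.
Proof.
have h : 0 <= \sum_(i <- r) \sum_(j <- r) (a i - a j) ^+ 2.
  by apply: sumr_ge0 => i _; apply: sumr_ge0 => j _; exact: sqr_ge0.
have e : \sum_(i <- r) \sum_(j <- r) (a i - a j) ^+ 2 =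
  2 * ((size r)%:R * \sum_(i <- r) a i ^+ 2) - 2 * (\sum_(i <- r) a i) ^+ 2.
  transitivity (\sum_(i <- r) \sum_(j <- r) (a i ^+ 2 + a j ^+ 2 - 2 * (a i * a j))).
    by apply: eq_bigr => i _; apply: eq_bigr => j _; ring.
  rewrite (eq_bigr (fun i => (size r)%:R * a i ^+ 2 + \sum_(j <- r) a j ^+ 2
       - 2 * (a i * \sum_(j <- r) a j))); last first.
    move=> i _; rewrite !big_split /= sumrN sum_cst.
    by rewrite -mulr_sumr -mulr_sumr.
  rewrite !big_split /= sumrN sum_cst.
  rewrite -mulr_sumr -mulr_sumr -mulr_suml expr2; ring.
move: h; rewrite e subr_ge0 ler_pM2l //.
Qed.

Lemma top_sub (I : Type) (r : seq I) (F G : I -> R) s :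
  (forall i, 0 <= F i) -> (forall i, 0 <= G i) ->
  top_sum s [seq F i + G i | i <- r] <= top_sum s (map F r) + top_sum s (map G r).
Proof.
move=> F0 G0.
have hF : all (fun x => 0 <= x) (map F r) by elim: r => //= i r ->; rewrite ?F0 ?G0.
have hG : all (fun x => 0 <= x) (map G r) by clear hF; elim: r => //= i r ->; rewrite ?F0 ?G0.
have [tF tF0 ->] := @top_L R s _ hF.
have [tG tG0 ->] := @top_L R s _ hG.
apply: le_trans (top_U _ _ (addr_ge0 tF0 tG0)) _.
rewrite !big_map mulrDr -!addrA lerD2l addrCA lerD2l -big_split /=.
apply: ler_sum => i _; rewrite [X in pp X](_ : _ = (F i - tF) + (G i - tG)) ?pp_add //.
ring.
Qed.

Lemma top_CS s (l : seq R) : all (fun x => 0 <= x) l ->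
  top_sum s l ^+ 2 <= s%:R * \sum_(x <- l) x ^+ 2.
Proof.
move=> hl; rewrite top_sumE.
apply: le_trans (cs_seq _ _) _.
rewrite size_iota subn0; apply: ler_wpM2l => //.
rewrite sum_srt; apply: sum_nat_le => [i hi|i]; last exact: sqr_ge0.
by rewrite nth_default // expr0n.
Qed.

End Top2.

Lemma F2_cases (u : 'F_2) : u = 0 \/ u = 1.
Proof. by case: u => [[|[|]]] //= ?; [left|right]; apply: val_inj. Qed.

Section Four.
Variable R : realFieldType.
Variable n : nat.
Implicit Types (a x y z : 'rV['F_2]_n).

Lemma dotF2B a x y : dotF2 a (x - y) = dotF2 a x - dotF2 a y.
Proof. by rewrite /dotF2 [(x - y)^T]linearB mulmxBr !mxE. Qed.

Lemma dotF2Dl a b x : dotF2 (a + b) x = dotF2 a x + dotF2 b x.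
Proof. by rewrite /dotF2 mulmxDl mxE. Qed.

Lemma chr_mul a x y : chr R a x * chr R a y = chr R a (x - y).
Proof.
rewrite /chr dotF2B.
by case: (F2_cases (dotF2 a x)) => ->; case: (F2_cases (dotF2 a y)) => ->;
  rewrite /= ?mulr1 ?mul1r ?mulrNN ?mulr1 //.
Qed.

Lemma chr_sum z : \sum_a chr R a z = if z == 0 then (2 ^+ n) else 0.
Proof.
case: eqP => [->|/eqP nz].
  rewrite (eq_bigr (fun _ => 1)); last by move=> a _; rewrite /chr /dotF2 trmx0 mulmx0 mxE eqxx.
  by rewrite sumr_const card_mx card_Fp // mul1n natrX.
have [i zi] : exists i, z 0 i != 0.
  apply/existsP; rewrite -negb_forall; apply: contra nz => /forallP hz.
  by apply/eqP/rowP => j; rewrite mxE; exact/eqP/hz.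
set e : 'rV['F_2]_n := delta_mx 0 i.
have de a : dotF2 (a + e) z = dotF2 a z + 1.
  rewrite dotF2Dl; congr (_ + _).
  rewrite /dotF2 /e -rowE mxE mxE; by case: (F2_cases (z 0 i)) zi => ->.
have he a : chr R (a + e) z = - chr R a z.
  rewrite /chr de; case: (F2_cases (dotF2 a z)) => -> //=.
  by rewrite opprK.
set S := \sum_a chr R a z.
have : S = - S.
  rewrite {1}/S (reindex_inj (addIr e)) /= (eq_bigr _ (fun a _ => he a)).
  by rewrite sumrN.
move/eqP; rewrite -addr_eq0 -mulr2n -mulr_natr mulf_eq0 pnatr_eq0 orbF.
by move/eqP.
Qed.

Lemma parseval (f : 'rV['F_2]_n -> R) :
  \sum_a fourier f a ^+ 2 = norm2sq f.
Proof.
have n0 : (2 ^+ n : R) != 0 by rewrite expf_neq0 // pnatr_eq0.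
rewrite /fourier /norm2sq.
transitivity (((2 ^+ n)^-1) ^+ 2 * \sum_a \sum_x \sum_y f x * f y * (chr R a x * chr R a y)).
  rewrite mulr_sumr; apply: eq_bigr => a _; rewrite exprMn; congr (_ * _).
  rewrite expr2 mulr_suml; apply: eq_bigr => x _; rewrite mulr_sumr.
  apply: eq_bigr => y _; ring.
transitivity (((2 ^+ n)^-1) ^+ 2 * \sum_x \sum_y f x * f y * \sum_a chr R a (x - y)).
  congr (_ * _); rewrite exchange_big; apply: eq_bigr => x _.
  rewrite exchange_big; apply: eq_bigr => y _; rewrite mulr_sumr.
  by apply: eq_bigr => a _; rewrite chr_mul.
have inner x : \sum_y f x * f y * \sum_a chr R a (x - y) = f x ^+ 2 * 2 ^+ n.
  rewrite (bigD1 x) //= chr_sum subrr eqxx big1 ?addr0 ?expr2 //.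
  by move=> y hy; rewrite chr_sum subr_eq0 eq_sym (negbTE hy) mulr0.
rewrite (eq_bigr _ (fun x _ => inner x)) -mulr_suml.
set T := \sum_x _.
by field.
Qed.

End Four.

Section Cosets.
Variable n : nat.
Implicit Types (A : 'M['F_2]_n) (a b x v : 'rV['F_2]_n).

Definition coset A a : {set 'rV['F_2]_n} := [set b | (b - a <= A)%MS].

Lemma subv_sub A x v : (x <= A)%MS -> (v <= A)%MS -> (x - v <= A)%MS.
Proof. by move=> hx hv; apply: addmx_sub => //; rewrite eqmx_opp. Qed.

Lemma coset_self A a : a \in coset A a.
Proof. by rewrite inE subrr sub0mx. Qed.

Lemma in_coset A a b : (b \in coset A a) = (b - a <= A)%MS.
Proof. by rewrite inE. Qed.

Lemma coset_in A a : coset A a \in cosets_of A.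
Proof. by apply/imsetP; exists a. Qed.

Lemma coset_eq A C b : C \in cosets_of A -> b \in C -> C = coset A b.
Proof.
case/imsetP => a _ -> hb; rewrite inE in hb; apply/setP => x; rewrite !inE.
apply/idP/idP => h.
  rewrite (_ : x - b = (x - a) - (b - a)); first exact: subv_sub.
  by rewrite opprB addrA subrK.
rewrite (_ : x - a = (x - b) + (b - a)); first exact: addmx_sub.
by rewrite addrA subrK.
Qed.

Lemma cosets_mem A b C : (C \in cosets_of A) && (b \in C) = (C == coset A b).
Proof.
apply/idP/eqP => [/andP[hC hb]|->]; first exact: coset_eq.
by rewrite coset_in coset_self.
Qed.

End Cosets.

Section Det.
Variable R : realFieldType.
Variable n : nat.
Variable f : 'rV['F_2]_n -> R.
Implicit Types (A : 'M['F_2]_n) (a b x v : 'rV['F_2]_n) (C : {set 'rV['F_2]_n}).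

Definition E b := fourier f b ^+ 2.
Lemma E_ge0 b : 0 <= E b. Proof. exact: sqr_ge0. Qed.

Definition mx C := Order.arg_max (odflt 0 [pick b in C]) (mem C) E.

Lemma mxP A C : C \in cosets_of A -> mx C \in C /\ forall b, b \in C -> E b <= E (mx C).
Proof.
move=> hC; have h0 : odflt 0 [pick b in C] \in C.
  case: pickP => [b //|h]; case/imsetP: hC h => a _ -> h.
  by move: (h a); rewrite inE subrr sub0mx.
rewrite /mx; case: (arg_maxP E h0) => i hi hmax; split => // b hb; exact: hmax.
Qed.

Definition Zc C := pp (energy f C - E (mx C)).

Lemma energy_split A C : C \in cosets_of A ->
  energy f C = E (mx C) + \sum_(b in C | b != mx C) E b.
Proof. by move=> hC; have [hm _] := mxP hC; rewrite /energy (bigD1 (mx C)). Qed.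

Lemma ZcE A C : C \in cosets_of A -> Zc C = \sum_(b in C | b != mx C) E b.
Proof.
move=> hC; rewrite /Zc (energy_split hC) [E (mx C) + _]addrC addrK pp_id //.
by apply: sumr_ge0 => b _; exact: E_ge0.
Qed.

Definition Pc C := \sum_(b in C) \sum_(b' in C | b' != b) E b * E b'.

Lemma Zc_sq A C : C \in cosets_of A -> Zc C ^+ 2 <= Pc C.
Proof.
move=> hC; have [hm hmax] := mxP hC.
rewrite (ZcE hC) expr2 /Pc [X in _ <= X](bigD1 (mx C)) //= mulr_suml.
rewrite -[X in X <= _]add0r; apply: lerD.
  by apply: sumr_ge0 => b' _; apply: mulr_ge0; exact: E_ge0.
apply: ler_sum => b /andP[hb hbm]; rewrite -mulr_sumr; apply: ler_wpM2l; first exact: E_ge0.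
have e1 : \sum_(b' in C | b' != b) E b' = energy f C - E b.
  by rewrite /energy [in RHS](bigD1 b) //= [fourier f b ^+ 2 + _]addrC addrK.
rewrite e1 -(ZcE hC) /Zc pp_id; last first.
  by rewrite subr_ge0 (energy_split hC) lerDl sumr_ge0 // => *; exact: E_ge0.
by rewrite lerB // hmax.
Qed.
Definition X A := \sum_b \sum_b' (if (b' != b) && (b' - b <= A)%MS then E b * E b' else 0).

Lemma sumPc A : \sum_(C in cosets_of A) Pc C = X A.
Proof.
transitivity (\sum_(C in cosets_of A) \sum_b (if b \in C then \sum_(b' in C | b' != b) E b * E b' else 0)).
  by apply: eq_bigr => C _; rewrite /Pc big_mkcond.
rewrite exchange_big; apply: eq_bigr => b _.
rewrite -big_mkcondr (big_pred1 (coset A b)); last by move=> C; rewrite /= cosets_mem.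
rewrite big_mkcond; apply: eq_bigr => b' _; by rewrite in_coset andbC.
Qed.

Lemma sum_sub_le (T : finType) (S : {set T}) (g : T -> R) :
  (forall y, 0 <= g y) -> \sum_(y in S) g y <= \sum_y g y.
Proof.
move=> g0; rewrite [X in _ <= X](bigID (mem S)) /= lerDl.
by apply: sumr_ge0 => y _.
Qed.

Lemma mx_inj A : {in cosets_of A &, injective mx}.
Proof.
move=> C1 C2 h1 h2 e.
have [m1 _] := mxP h1; have [m2 _] := mxP h2.
by rewrite (coset_eq h1 m1) (coset_eq h2 m2) e.
Qed.

Lemma det_bound A s :
  top_sum s (coset_energies f A) - top_sum s (coef_energies f)
    <= top_sum s [seq Zc C | C <- enum (cosets_of A)].
Proof.
set r := enum (cosets_of A).
have e1 : coset_energies f A = [seq E (mx C) + Zc C | C <- r].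
  apply/eq_in_map => C; rewrite mem_enum => hC.
  rewrite /Zc pp_id; first by rewrite addrC subrK.
  by rewrite subr_ge0 (energy_split hC) lerDl sumr_ge0 // => *; exact: E_ge0.
rewrite e1 lerBlDl.
apply: le_trans (@top_sub R _ r (fun C => E (mx C)) Zc s (fun C => E_ge0 _) (fun C => pp_ge0 _)) _.
rewrite lerD2r.
have hc : all (fun y : R => 0 <= y) (coef_energies f).
  by rewrite /coef_energies all_map; apply/allP => b _ /=; exact: sqr_ge0.
have [t t0 ->] := @top_L R s _ hc.
apply: le_trans (top_U _ _ t0) _; rewrite lerD2l.
rewrite /coef_energies !big_map /r big_enum /=.
rewrite -(big_imset (fun b => pp (E b - t)) (@mx_inj A)) /=.
rewrite big_enum /=.
apply: le_trans (sum_sub_le _ (fun b => pp_ge0 _)) _.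
by rewrite [X in _ <= X](eq_bigl predT) // => y; rewrite inE.
Qed.

Lemma det_bound2 A s :
  top_sum s [seq Zc C | C <- enum (cosets_of A)] ^+ 2 <= s%:R * X A.
Proof.
have hz : all (fun y : R => 0 <= y) [seq Zc C | C <- enum (cosets_of A)].
  by rewrite all_map; apply/allP => C _ /=; exact: pp_ge0.
apply: le_trans (top_CS s hz) _; apply: ler_wpM2l => //.
rewrite big_map big_enum /= -sumPc; apply: ler_sum => C hC; exact: Zc_sq hC.
Qed.

End Det.

Section Sub.
Variable n : nat.
Implicit Types (A g : 'M['F_2]_n) (u v w z : 'rV['F_2]_n).

Lemma card_subspace A : #|[set v : 'rV['F_2]_n | (v <= A)%MS]| = (2 ^ \rank A)%N.
Proof.
pose phi (x : 'rV['F_2]_(\rank A)) := x *m row_base A.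
have inj : injective phi := row_free_inj (row_base_free A).
have -> : [set v : 'rV['F_2]_n | (v <= A)%MS] = phi @: [set: 'rV_(\rank A)].
  apply/setP => v; rewrite inE; apply/idP/imsetP.
    by rewrite -(eq_row_base A) => /submxP[x ->]; exists x.
  by case=> x _ ->; rewrite /phi; apply: submx_trans (submxMl _ _) _; rewrite eq_row_base.
by rewrite card_imset // cardsT card_mx card_Fp // mul1n.
Qed.

Lemma mxF2_dbl (m p : nat) (M : 'M['F_2]_(m, p)) : M + M = 0.
Proof.
apply/matrixP => i j; rewrite !mxE.
by case: (F2_cases (M i j)) => ->; rewrite ?addr0 //; apply/eqP.
Qed.

Lemma dot_e v i : dotF2 v (delta_mx 0 i) = v 0 i.
Proof.
by rewrite /dotF2 trmx_delta -colE mxE.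
Qed.

Lemma dotF2Dr v a b : dotF2 v (a + b) = dotF2 v a + dotF2 v b.
Proof. by rewrite /dotF2 [(a + b)^T]linearD mulmxDr !mxE. Qed.

Lemma F2_ne0 (x : 'F_2) : x != 0 -> x = 1.
Proof. by case: (F2_cases x) => -> //; rewrite eqxx. Qed.

Lemma exists_u v w : v != 0 -> w != 0 ->
  exists u, dotF2 v u = 1 /\ dotF2 w u = 1.
Proof.
have nz (x : 'rV['F_2]_n) : x != 0 -> exists i, x 0 i = 1.
  move=> hx; have [i hi] : exists i, x 0 i != 0.
    apply/existsP; rewrite -negb_forall; apply: contra hx => /forallP hz.
    by apply/eqP/rowP => j; rewrite mxE; exact/eqP/hz.
  by exists i; exact: F2_ne0.
move=> /nz[i vi] /nz[j wj].
case: (F2_cases (w 0 i)) => wi; last by exists (delta_mx 0 i); rewrite !dot_e.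
case: (F2_cases (v 0 j)) => vj; last by exists (delta_mx 0 j); rewrite !dot_e.
exists (delta_mx 0 i + delta_mx 0 j).
by rewrite !dotF2Dr !dot_e vi wj vj wi add0r addr0.
Qed.

Definition trv u z : 'M['F_2]_n := 1%:M + u^T *m z.

Lemma dot_mul v u z : v *m (u^T *m z) = dotF2 v u *: z.
Proof. by rewrite mulmxA [v *m u^T]mx11_scalar mul_scalar_mx. Qed.

Lemma trv_inv u z : dotF2 z u = 0 -> trv u z *m trv u z = 1%:M.
Proof.
move=> h; rewrite /trv mulmxDl !mulmxDr !mul1mx mulmx1 -addrA addrA.
rewrite [u^T *m z *m _]mulmxA -[u^T *m z *m u^T]mulmxA [z *m u^T]mx11_scalar.
rewrite (_ : ((z *m u^T) 0 0)%:M = 0); last first.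
  have -> : (z *m u^T) 0 0 = 0 by exact: h.
  by apply/matrixP => i j; rewrite !mxE mul0rn.
by rewrite mulmx0 mul0mx addr0 -addrA mxF2_dbl addr0.
Qed.

Lemma trv_map v w u : dotF2 v u = 1 -> v *m trv u (w - v) = w.
Proof.
by move=> h; rewrite /trv mulmxDr mulmx1 dot_mul h scale1r addrC subrK.
Qed.


Lemma dotF2Bl a b u : dotF2 (a - b) u = dotF2 a u - dotF2 b u.
Proof. by rewrite /dotF2 mulmxBl !mxE. Qed.

Definition Nc d v := #|[set A in codim_subspaces n d | (v <= A)%MS]|.

Lemma N_sym d v w : v != 0 -> w != 0 -> Nc d v = Nc d w.
Proof.
move=> hv hw; have [u [hvu hwu]] := exists_u hv hw.
set z := w - v; set g := trv u z.
have gg : g *m g = 1%:M by apply: trv_inv; rewrite /z dotF2Bl hvu hwu subrr.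
have gfree : row_free g by rewrite row_free_unit; exact: (mulmx1_unit gg).1.
pose Phi A := (<<A *m g>>%MS : 'M['F_2]_n).
have PhiS A : A \in codim_subspaces n d -> Phi A \in codim_subspaces n d.
  rewrite !inE => /andP[_ hr]; rewrite /Phi genmx_id eqxx /=.
  by rewrite genmxE mxrankMfree.
have PhiPhi A : A \in codim_subspaces n d -> Phi (Phi A) = A.
  rewrite inE => /andP[/eqP hA _]; rewrite /Phi -{2}hA; apply: eq_genmx.
  by apply: eqmx_trans (eqmxMr g (genmxE _)) _; rewrite -mulmxA gg mulmx1.
have PhiM A : (w <= Phi A)%MS = (v <= A)%MS.
  by rewrite /Phi genmxE -(trv_map w hvu) -/z -/g submxMfree.
rewrite /Nc.
have -> : [set A in codim_subspaces n d | (w <= A)%MS] =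
          Phi @: [set A in codim_subspaces n d | (v <= A)%MS].
  apply/setP => B; rewrite inE; apply/idP/imsetP.
    case/andP => hB hwB; exists (Phi B); last by rewrite PhiPhi.
    by rewrite inE PhiS // -PhiM PhiPhi.
  case=> A; rewrite inE => /andP[hA hvA] ->.
  by rewrite PhiS // PhiM.
rewrite card_in_imset // => A1 A2 h1 h2 e.
have h1S : A1 \in codim_subspaces n d by move: h1; rewrite inE => /andP[].
have h2S : A2 \in codim_subspaces n d by move: h2; rewrite inE => /andP[].
by rewrite -(PhiPhi A1 h1S) e PhiPhi.
Qed.

Lemma sum_N d : (d <= n)%N ->
  (\sum_v Nc d v = #|codim_subspaces n d| * 2 ^ (n - d))%N.
Proof.
move=> dn; rewrite /Nc.
transitivity (\sum_(v : 'rV['F_2]_n) \sum_(A in codim_subspaces n d) ((v <= A)%MS : nat))%N.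
  apply: eq_bigr => v _; rewrite -sum1_card big_mkcond [RHS]big_mkcond /=.
  by apply: eq_bigr => A _; rewrite !inE; case: (v <= A)%MS; rewrite ?andbT ?andbF //; case: ifP.
rewrite exchange_big /= -sum_nat_const; apply: eq_bigr => A.
rewrite inE => /andP[_ /eqP hr]; rewrite -hr -card_subspace -sum1_card.
by rewrite [RHS]big_mkcond; apply: eq_bigr => v _; rewrite inE; case: (v <= A)%MS.
Qed.

Lemma N0 d : Nc d 0 = #|codim_subspaces n d|.
Proof. by rewrite /Nc; apply: eq_card => A; rewrite !inE sub0mx andbT. Qed.

Lemma N_bound d v : (d <= n)%N -> v != 0 ->
  (Nc d v * 2 ^ d <= #|codim_subspaces n d|)%N.
Proof.
move=> dn hv; have := sum_N dn.
rewrite (bigD1 0) //= N0.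
rewrite (eq_bigr (fun _ => Nc d v)); last by move=> w hw; apply: N_sym.
rewrite sum_nat_const cardC1 card_mx card_Fp // mul1n.
have n0 : (0 < n)%N.
  case: n v hv => // v; rewrite (_ : v = 0) ?eqxx //.
  by apply/rowP => -[].
set S := #|_|; set c := Nc d v.
have -> : (2 ^ n = 2 ^ (n - d) * 2 ^ d)%N by rewrite -expnD subnK.
have P1 : (1 <= 2 ^ (n - d))%N by rewrite expn_gt0.
have Q1 : (1 <= 2 ^ d)%N by rewrite expn_gt0.
have PQ : (2 <= 2 ^ (n - d) * 2 ^ d)%N by rewrite -expnD subnK // -{1}(expn1 2) leq_exp2l.
move: P1 Q1 PQ; set P := (2 ^ (n - d))%N; set Q := (2 ^ d)%N.
move=> P1 Q1 PQ h. nia.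
Qed.

End Sub.

Lemma top_ge0 (R : realFieldType) s (l : seq R) : all (fun y => 0 <= y) l -> 0 <= top_sum s l.
Proof.
move=> hl; have [t t0 ->] := @top_L R s _ hl.
apply: addr_ge0; first exact: mulr_ge0.
by apply: sumr_ge0 => x _; exact: pp_ge0.
Qed.

Lemma S_nonempty n d : (d <= n)%N -> (0 < #|codim_subspaces n d|)%N.
Proof.
move=> dn; apply/card_gt0P; exists (<<(pid_mx (n - d) : 'M['F_2]_n)>>%MS).
by rewrite inE genmx_id eqxx /= genmxE rank_pid_mx ?leq_subr.
Qed.

Lemma sumX (R : realFieldType) n (f : 'rV['F_2]_n -> R) d : (d <= n)%N ->
  \sum_(A in codim_subspaces n d) X f A <=
  #|codim_subspaces n d|%:R / (2 ^ d)%:R * (\sum_b E f b) ^+ 2.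
Proof.
move=> dn; set S := codim_subspaces n d.
have q0 : 0 < (2 ^ d)%:R :> R by rewrite ltr0n expn_gt0.
rewrite /X exchange_big /=.
rewrite expr2 mulr_suml mulr_sumr; apply: ler_sum => b _.
rewrite exchange_big /= mulr_sumr mulr_sumr; apply: ler_sum => b' _.
rewrite -big_mkcondr /=.
have E0 : 0 <= E f b * E f b' by apply: mulr_ge0; exact: E_ge0.
case: (eqVneq b' b) => [->|hb].
  rewrite big_pred0; last by move=> A; rewrite /= andbF.
  by apply: mulr_ge0; [apply: divr_ge0 | apply: mulr_ge0; exact: E_ge0].
rewrite (eq_bigl (fun A => A \in [set A in S | (b' - b <= A)%MS])); last first.
  by move=> A; rewrite /= !inE.
rewrite sumr_const -[X in X <= _]mulr_natl; apply: ler_wpM2r => //.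
rewrite ler_pdivlMr //; rewrite -natrM ler_nat.
apply: N_bound => //; by rewrite subr_eq0.
Qed.

Unset Implicit Arguments.

Theorem corollary3p3 (R : realFieldType) (n : nat) (f : 'rV['F_2]_n -> R)
  (s d : nat) (eps : R) :
  (1 <= s)%N -> 0 < eps -> eps <= 1 / 2 ->
  (2 ^ d)%:R = 2 * s%:R / eps ^+ 4 ->
  (d <= n)%N ->
  prob (codim_subspaces n d)
    (fun A => top_sum s (coset_energies f A) - top_sum s (coef_energies f)
              <= 5 * eps ^+ 2 * norm2sq f)
  >= 15 / 16 :> R.
Proof.
move=> s1 e0 e1 hd dn.
set S := codim_subspaces n d.
set P := (fun A => _ <= _).
set W := norm2sq f.
have eW : \sum_b E f b = W by exact: parseval.
have W0 : 0 <= W by rewrite -eW; apply: sumr_ge0 => b _; exact: E_ge0.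
set c := 25 * eps ^+ 4 * W ^+ 2.
have c0 : 0 <= c by apply: mulr_ge0; [apply: mulr_ge0 => //; apply: exprn_ge0; exact: ltW|exact: sqr_ge0].
have X0 A : 0 <= X f A.
  by apply: sumr_ge0 => b _; apply: sumr_ge0 => b' _; case: ifP => // _; apply: mulr_ge0; exact: E_ge0.
have good A : s%:R * X f A <= c -> P A.
  move=> h; rewrite /P; apply: le_trans (det_bound f A s) _.
  have hz : all (fun y => 0 <= y) [seq Zc f C | C <- enum (cosets_of A)].
    by rewrite all_map; apply/allP => C _ /=; exact: pp_ge0.
  have T0 := @top_ge0 R s _ hz.
  have T2 := det_bound2 f A s.
  set T := top_sum _ _ in T0 T2 *.
  have c5 : 0 <= 5 * eps ^+ 2 * W by apply: mulr_ge0 => //; apply: mulr_ge0 => //; exact: sqr_ge0.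
  have ec : c = (5 * eps ^+ 2 * W) ^+ 2 by rewrite /c; ring.
  rewrite ec in h.
  have : T ^+ 2 <= (5 * eps ^+ 2 * W) ^+ 2 by exact: le_trans T2 h.
  move=> hT; set K := 5 * eps ^+ 2 * W in c5 hT *; nra.
set F := [set A in S | ~~ P A].
have Fc A : A \in F -> c < s%:R * X f A.
  rewrite inE => /andP[_ hA]; rewrite ltNge; apply: contra hA; exact: good.
have hsd : s%:R / (2 ^ d)%:R = eps ^+ 4 / 2 :> R.
  rewrite hd; field; by rewrite pnatr_eq0 -lt0n s1 (gt_eqF e0) /=.
have sumXS := sumX f dn; rewrite eW -/S in sumXS.
have sumF : \sum_(A in F) s%:R * X f A <= s%:R * \sum_(A in S) X f A.
  rewrite -mulr_sumr; apply: ler_wpM2l => //.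
  rewrite [X in _ <= X](bigID (mem F)) /= -[X in X <= _]addr0; apply: lerD.
    rewrite le_eqVlt; apply/orP; left; apply/eqP/eq_bigl => A; apply/idP/andP => [h|[]//]; split=> //.
    by move: h; rewrite inE => /andP[].
  by apply: sumr_ge0.
have sumFS : \sum_(A in F) s%:R * X f A <= #|S|%:R * c / 50.
  apply: le_trans sumF _; apply: le_trans (ler_wpM2l (ler0n _ s) sumXS) _.
  rewrite le_eqVlt; apply/orP; left; apply/eqP; rewrite hd /c; field.
  all: try by rewrite pnatr_eq0 -lt0n s1 (gt_eqF e0).
have cF : #|F|%:R * c <= #|S|%:R * c / 50.
  apply: le_trans sumFS.
  rewrite mulr_natl -sumr_const; apply: ler_sum => A hA; exact: ltW (Fc A hA).
have S0 : (0 < #|S|)%N by exact: S_nonempty.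
have Fle : (#|F| * 16 <= #|S|)%N.
  case: (ltrP 0 c) => hc.
    have : #|F|%:R * 50 <= #|S|%:R :> R.
      by move: cF; rewrite -ler_pdivlMr // mulrAC mulfK ?gt_eqF // => h; rewrite -ler_pdivlMr // ; apply: le_trans h _; rewrite mulrC.
    rewrite -natrM ler_nat => h; apply: leq_trans h; rewrite leq_mul2l ltnW ?orbT //.
  have c00 : c = 0 by apply/eqP; rewrite eq_le hc c0.
  have W2 : W ^+ 2 = 0.
    have e4 : 0 < 25 * eps ^+ 4 by apply: mulr_gt0 => //; exact: exprn_gt0.
    by apply/eqP; move: c00; rewrite /c => /eqP; rewrite mulf_eq0 (gt_eqF e4).
  suff -> : #|F| = 0%N by [].
  apply/eqP; rewrite cards_eq0; apply/eqP/setP => A; rewrite in_set0.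
  apply/negbTE/negP => hA; have := Fc A hA; rewrite c00.
  have : s%:R * X f A <= \sum_(B in F) s%:R * X f B.
    rewrite (bigD1 A) //= lerDl; apply: sumr_ge0 => B _; exact: mulr_ge0.
  move=> h1 h2; have := le_trans h1 sumFS; rewrite c00 mulr0 mul0r => h3.
  by move: (lt_le_trans h2 h3); rewrite ltxx.
have eP : #|[set A in S | P A]| = (#|S| - #|F|)%N.
  rewrite -(cardID P S).
  have -> : #|[set A in S | P A]| = #|[predI S & P]| by apply: eq_card => A; rewrite !inE.
  have -> : #|F| = #|[predD S & P]| by apply: eq_card => A; rewrite !inE andbC.
  by rewrite addnK.
rewrite /prob -/S eP natrB; last by apply: leq_trans Fle; rewrite leq_pmulr.
have SR : 0 < #|S|%:R :> R by rewrite ltr0n.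
rewrite ler_pdivlMr //.
have : (#|F|%:R * 16 <= #|S|%:R :> R) by rewrite -natrM ler_nat.
lra.
Qed.
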